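(* Let $A=\begin{pmatrix} a & b\\ b & d\end{pmatrix}$ be a positive symmetric $2\times 2$ matrix. Let $\lambda=\left(abd+b^2\sqrt{ad}\right)^{-1/2}$ and $D=\begin{pmatrix} \lambda\sqrt{bd} & 0\\ 0 & \lambda\sqrt{ab}\end{pmatrix}$. Then the alternate minimization limit of $A$ is the doubly stochastic matrix \[ S(A)=DAD=\begin{pmatrix}\alpha & \beta\\ \beta & \alpha\end{pmatrix},\qquad \alpha=\frac{\sqrt{ad}}{\sqrt{ad}+b},\quad \beta=\frac{b}{\sqrt{ad}+b}. \]
   Context: A positive matrix has all entries positive. For an $n\times n$ matrix $A=(a_{i,j})$ let $\mathrm{row}_i(A)=\sum_j a_{i,j}$ and $\mathrm{col}_j(A)=\sum_i a_{i,j}$; $A$ is doubly stochastic if all row and column sums equal $1$. For positive $A$ let $X(A)=\mathrm{diag}(1/\mathrm{row}_1(A),\ldots,1/\mathrm{row}_n(A))$ and $Y(A)=\mathrm{diag}(1/\mathrm{col}_1(A),\ldots,1/\mathrm{col}_n(A))$. The alternate minimization sequence of $A$ is $A^{(0)}=A$, $A^{(2k+1)}=A^{(2k)}\,Y(A^{(2k)})$, $A^{(2k+2)}=X(A^{(2k+1)})\,A^{(2k+1)}$ ($k\ge 0$); its limit $S(A)=\lim_{\ell\to\infty}A^{(\ell)}$ is the alternate minimization limit of $A$. *)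

(* Defs.v *)
From HB Require Import structures.
From mathcomp Require Import all_boot all_order all_algebra.
From mathcomp Require Import all_classical all_reals topology normedtype sequences.
Set Implicit Arguments. Unset Strict Implicit. Unset Printing Implicit Defensive.
Import Order.TTheory GRing.Theory Num.Theory.
Import numFieldNormedType.Exports.
Local Open Scope classical_set_scope.
Local Open Scope ring_scope.

Section Defs.
Variables (R : realType) (n : nat).

Definition positive_mx (A : 'M[R]_n) : Prop := forall i j, 0 < A i j.

Definition row_sum (A : 'M[R]_n) (i : 'I_n) : R := \sum_(j < n) A i j.
Definition col_sum (A : 'M[R]_n) (j : 'I_n) : R := \sum_(i < n) A i j.

Definition doubly_stochastic (A : 'M[R]_n) : Prop :=
  (forall i, row_sum A i = 1) /\ (forall j, col_sum A j = 1).

Definition Xmx (A : 'M[R]_n) : 'M[R]_n := diag_mx (\row_i (row_sum A i)^-1).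
Definition Ymx (A : 'M[R]_n) : 'M[R]_n := diag_mx (\row_j (col_sum A j)^-1).

(* Alternate minimization sequence: A^(0) = A,
   A^(2k+1) = A^(2k) Y(A^(2k)),  A^(2k+2) = X(A^(2k+1)) A^(2k+1). *)
Fixpoint alt_min (A : 'M[R]_n) (l : nat) : 'M[R]_n :=
  match l with
  | 0 => A
  | l'.+1 => let B := alt_min A l' in
             if odd l' then Xmx B *m B else B *m Ymx B
  end.

(* S is the alternate minimization limit of A: A^(l) -> S (entrywise,
   i.e. in the finite-dimensional matrix topology). *)
Definition is_alt_min_limit (A S : 'M[R]_n) : Prop :=
  forall i j, (fun l : nat => alt_min A l i j) @ \oo --> S i j.

End Defs.

Definition mx2 {R : ringType} (x y z w : R) : 'M[R]_2 :=
  \matrix_(i < 2, j < 2)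
     if i == 0 :> nat then (if j == 0 :> nat then x else y)
     else (if j == 0 :> nat then z else w).

(* Main.v *)
Require Import Defs.
From HB Require Import structures.
From mathcomp Require Import all_boot all_order all_algebra.
From mathcomp Require Import all_classical all_reals topology normedtype sequences.
Import Order.TTheory GRing.Theory Num.Theory.
Import numFieldNormedType.Exports.
Local Open Scope classical_set_scope.
Local Open Scope ring_scope.

Section M.
Variable R : realType.
Implicit Types x y z w : R.

Lemma mx2_00 x y z w : mx2 x y z w 0 0 = x. Proof. by rewrite mxE. Qed.
Lemma mx2_01 x y z w : mx2 x y z w 0 1 = y. Proof. by rewrite mxE. Qed.
Lemma mx2_10 x y z w : mx2 x y z w 1 0 = z. Proof. by rewrite mxE. Qed.
Lemma mx2_11 x y z w : mx2 x y z w 1 1 = w. Proof. by rewrite mxE. Qed.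

Lemma ord2P (P : 'I_2 -> Prop) : P 0 -> P 1 -> forall i, P i.
Proof. by move=> h0 h1 [[|[|i]] Hi] //; [rewrite (_ : Ordinal Hi = 0) // | rewrite (_ : Ordinal Hi = 1) //]; apply/val_inj. Qed.

Lemma mx2_eq (M N : 'M[R]_2) : M 0 0 = N 0 0 -> M 0 1 = N 0 1 -> M 1 0 = N 1 0 -> M 1 1 = N 1 1 -> M = N.
Proof. move=> h1 h2 h3 h4; apply/matrixP; apply: ord2P; apply: ord2P => //. Qed.

Lemma sum2 (F : 'I_2 -> R) : \sum_(i < 2) F i = F 0 + F 1.
Proof. rewrite big_ord_recr big_ord_recr big_ord0 /=. rewrite add0r; congr (F _ + F _); exact: val_inj. Qed.

Lemma mul_mx2 x y z w x' y' z' w' : mx2 x y z w *m mx2 x' y' z' w' =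
  mx2 (x * x' + y * z') (x * y' + y * w') (z * x' + w * z') (z * y' + w * w').
Proof. by apply: mx2_eq; rewrite !mxE sum2 ?mx2_00 ?mx2_01 ?mx2_10 ?mx2_11. Qed.

Lemma Xmx2 x y z w : Xmx (mx2 x y z w) *m mx2 x y z w =
  mx2 (x / (x + y)) (y / (x + y)) (z / (z + w)) (w / (z + w)).
Proof.
apply: mx2_eq; rewrite !mxE sum2 !mxE /row_sum !sum2 ?mx2_00 ?mx2_01 ?mx2_10 ?mx2_11 /=;
 rewrite ?mulr1n ?mulr0n ?mul0r ?addr0 ?add0r mulrC //.
Qed.

Lemma Ymx2 x y z w : mx2 x y z w *m Ymx (mx2 x y z w) =
  mx2 (x / (x + z)) (y / (y + w)) (z / (x + z)) (w / (y + w)).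
Proof.
apply: mx2_eq; rewrite !mxE sum2 !mxE /col_sum !sum2 ?mx2_00 ?mx2_01 ?mx2_10 ?mx2_11 /=;
 rewrite ?mulr1n ?mulr0n ?mul0r ?mulr0 ?addr0 ?add0r //.
Qed.
End M.
From mathcomp Require Import ring lra.

Ltac pos := repeat first [ assumption | apply: addr_gt0 | apply: mulr_gt0 | apply: divr_gt0 | (rewrite invr_gt0) | apply: exprn_gt0 ].
Ltac nz := apply/lt0r_neq0; pos.
Ltac fld := field; repeat (apply/andP; split); nz.

Lemma kappa_aux (R : realType) (b r : R) : 0 < b -> 0 < r -> `|(b - r) / (b + r)| < 1.
Proof.
move=> hb hr.
rewrite normrM normfV (gtr0_norm (_ : 0 < b + r)); last by pos.
rewrite ltr_pdivrMr; last by pos.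
by rewrite mul1r ltr_norml; apply/andP; split; lra.
Qed.

Lemma cvg_alt (R : realType) (u v : nat -> R) (L : R) :
  u @ \oo --> L -> v @ \oo --> L ->
  (fun n => if odd n then u n else v n) @ \oo --> L.
Proof.
move=> /cvgrPdist_lt hu /cvgrPdist_lt hv; apply/cvgrPdist_lt => e e0.
have := hu e e0; have := hv e e0; move=> Hv Hu.
near=> n. case: ifP => _.
- near: n. exact: Hu.
- near: n. exact: Hv.
Unshelve. all: by end_near.
Qed.

Section Seq.
Variables (R : realType) (a b d : R).
Hypotheses (ha : 0 < a) (hb : 0 < b) (hd : 0 < d).

Definition g (t : R) := (b * t + d) / (a * t + b).
Fixpoint ts l := if l is l'.+1 then g (ts l') else 1.
Definition Mod t := mx2 (t*a/(t*a+b)) (t*b/(t*b+d)) (b/(t*a+b)) (d/(t*b+d)).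
Definition Mev t := mx2 (t*a/(t*a+b)) (b/(t*a+b)) (t*b/(t*b+d)) (d/(t*b+d)).

Lemma g_gt0 t : 0 < t -> 0 < g t.
Proof. by move=> t0; rewrite /g; pos. Qed.

Lemma ts_gt0 l : 0 < ts l.
Proof. by elim: l => [|l IH] //=; apply: g_gt0. Qed.

Lemma XMod t : 0 < t -> Xmx (Mod t) *m Mod t = Mev (g t).
Proof.
move=> t0; rewrite /Mod Xmx2 /Mev /g; congr mx2; fld.
Qed.

Lemma MevY t : 0 < t -> Mev t *m Ymx (Mev t) = Mod (g t).
Proof. move=> t0; rewrite /Mev Ymx2 /Mod /g; congr mx2; fld. Qed.

Lemma alt_form l : alt_min (mx2 a b b d) l.+1 = if odd l then Mev (ts l) else Mod (ts l).
Proof.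
elim: l => [|l IH].
  rewrite /= Ymx2 /Mod; congr mx2; fld.
change (alt_min (mx2 a b b d) l.+2) with (let B := alt_min (mx2 a b b d) l.+1 in if odd l.+1 then Xmx B *m B else B *m Ymx B).
cbv zeta; rewrite IH /=; case: (odd l) => /=.
  exact: MevY (ts_gt0 l).
exact: XMod (ts_gt0 l).
Qed.

Lemma cvg_frac' {u v : nat -> R} {u0 v0 L : R} :
  u @ \oo --> u0 -> v @ \oo --> v0 -> v0 != 0 -> L = u0 / v0 ->
  (fun n => u n / v n) @ \oo --> L.
Proof. move=> hu hv hv0 ->; apply: cvgM => //; exact: cvgV. Qed.

Let r := Num.sqrt (a * d).
Let r0 : 0 < r. Proof. by rewrite sqrtr_gt0; pos. Qed.
Let hr : r ^+ 2 = a * d. Proof. by rewrite sqr_sqrtr // ltW //; pos. Qed.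
Let hd' : d = r ^+ 2 / a. Proof. rewrite hr; field; exact: lt0r_neq0. Qed.
Let s := r / a.
Let s0 : 0 < s. Proof. by rewrite /s; pos. Qed.
Let kappa := (b - r) / (b + r).
Let h (t : R) := (t - s) / (t + s).

Lemma h_g t : 0 < t -> h (g t) = kappa * h t.
Proof.
move=> t0; rewrite /h /kappa /g /s hd'.
field. repeat (apply/andP; split); try nz.
Qed.

Lemma h_ts l : h (ts l) = kappa ^+ l * h 1.
Proof. elim: l => [|l IH]; first by rewrite mul1r. by rewrite /= h_g ?ts_gt0 // IH exprS mulrA. Qed.

Lemma kappa_lt1 : `|kappa| < 1.
Proof. exact: kappa_aux r0. Qed.

Lemma cvg_h : (fun l => h (ts l)) @ \oo --> 0.
Proof.
have -> : (fun l => h (ts l)) = (fun l => kappa ^+ l * h 1) by apply: funext => l; rewrite h_ts.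
rewrite -(mul0r (h 1)); apply: cvgM; [exact: cvg_expr kappa_lt1 | exact: cvg_cst].
Qed.

Lemma ts_h t : 0 < t -> t = s * (1 + h t) / (1 - h t).
Proof. move=> t0; rewrite /h; field; apply/andP; split; first nz. have -> : t + s - (t - s) = s + s by ring. nz. Qed.

Lemma cvg_ts : ts @ \oo --> s.
Proof.
have -> : ts = (fun l => (s * (1 + h (ts l))) / (1 - h (ts l))).
  by apply: funext => l; rewrite -ts_h // ts_gt0.
apply: (@cvg_frac' _ _ (s * (1 + 0)) (1 - 0)).
- apply: cvgM; first exact: cvg_cst. apply: cvgD; [exact: cvg_cst | exact: cvg_h].
- apply: cvgB; [exact: cvg_cst | exact: cvg_h].
- by rewrite subr0 oner_neq0.
- by rewrite addr0 subr0 mulr1 divr1.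
Qed.

Lemma cvg_tsM c : (fun l => ts l * c) @ \oo --> s * c.
Proof. apply: cvgM; [exact: cvg_ts | exact: cvg_cst]. Qed.
Lemma cvg_tsMD c e : (fun l => ts l * c + e) @ \oo --> s * c + e.
Proof. apply: cvgD; [exact: cvg_tsM | exact: cvg_cst]. Qed.

Lemma alt_limit : is_alt_min_limit (mx2 a b b d) (mx2 (r/(r+b)) (b/(r+b)) (b/(r+b)) (r/(r+b))).
Proof.
move=> i j; rewrite -cvg_shiftS /=.
have -> : (fun n => alt_min (mx2 a b b d) n.+1 i j) = fun n => if odd n then Mev (ts n) i j else Mod (ts n) i j.
  by apply: funext => n; rewrite alt_form; case: (odd n).
apply: cvg_alt; move: i j; apply: ord2P; apply: ord2P;
 rewrite /Mev /Mod ?mx2_00 ?mx2_01 ?mx2_10 ?mx2_11.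
all: under eq_cvg => n do rewrite ?mx2_00 ?mx2_01 ?mx2_10 ?mx2_11.
all: first [ apply: (cvg_frac' (cvg_tsM a) (cvg_tsMD a b))
       | apply: (cvg_frac' (cvg_cst b) (cvg_tsMD a b))
       | apply: (cvg_frac' (cvg_tsM b) (cvg_tsMD b d))
       | apply: (cvg_frac' (cvg_cst d) (cvg_tsMD b d)) ].
all: try nz.
all: rewrite /s ?hd'; field; repeat (apply/andP; split); nz.
Qed.
End Seq.

Lemma DAD (R : realType) (a b d : R) : 0 < a -> 0 < b -> 0 < d ->
  let A := mx2 a b b d in
  let lambda := (Num.sqrt (a * b * d + b ^+ 2 * Num.sqrt (a * d)))^-1 in
  let D := mx2 (lambda * Num.sqrt (b * d)) 0 0 (lambda * Num.sqrt (a * b)) in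
  let alpha := Num.sqrt (a * d) / (Num.sqrt (a * d) + b) in
  let beta := b / (Num.sqrt (a * d) + b) in
  D *m A *m D = mx2 alpha beta beta alpha.
Proof.
move=> ha hb hd.
have [x x0 ->] : exists2 x, 0 < x & a = x ^+ 2 by exists (Num.sqrt a); rewrite ?sqrtr_gt0 ?sqr_sqrtr // ltW.
have [y y0 ->] : exists2 y, 0 < y & b = y ^+ 2 by exists (Num.sqrt b); rewrite ?sqrtr_gt0 ?sqr_sqrtr // ltW.
have [z z0 ->] : exists2 z, 0 < z & d = z ^+ 2 by exists (Num.sqrt d); rewrite ?sqrtr_gt0 ?sqr_sqrtr // ltW.
have sq : forall u v : R, 0 < u -> 0 < v -> Num.sqrt (u ^+ 2 * v ^+ 2) = u * v.
  by move=> u v u0 v0; rewrite -exprMn sqrtr_sqr gtr0_norm // mulr_gt0.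
rewrite !sq //.
set Q := (_ + _).
have Q0 : 0 < Q by rewrite /Q; pos.
set L := Num.sqrt Q.
have L0 : 0 < L by rewrite sqrtr_gt0.
have hL : L ^+ 2 = Q by rewrite sqr_sqrtr // ltW.
move=> A lambda D alpha beta.
have HLL : L^-1 * L^-1 = Q^-1 by rewrite -invfM -expr2 hL.
rewrite /D /A !mul_mx2 /alpha /beta /lambda; congr mx2.
- transitivity (L^-1 * L^-1 * (x^+2 * y^+2 * z^+2)); first by ring.
  rewrite HLL /Q; field; repeat (apply/andP; split); nz.
- transitivity (L^-1 * L^-1 * (x * y^+4 * z)); first by ring.
  rewrite HLL /Q; field; repeat (apply/andP; split); nz.
- transitivity (L^-1 * L^-1 * (x * y^+4 * z)); first by ring.
  rewrite HLL /Q; field; repeat (apply/andP; split); nz.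
- transitivity (L^-1 * L^-1 * (x^+2 * y^+2 * z^+2)); first by ring.
  rewrite HLL /Q; field; repeat (apply/andP; split); nz.
Qed.

Theorem theorem6 (R : realType) (a b d : R) :
  positive_mx (mx2 a b b d) ->
  let A := mx2 a b b d in
  let lambda := (Num.sqrt (a * b * d + b ^+ 2 * Num.sqrt (a * d)))^-1 in
  let D := mx2 (lambda * Num.sqrt (b * d)) 0 0 (lambda * Num.sqrt (a * b)) in
  let alpha := Num.sqrt (a * d) / (Num.sqrt (a * d) + b) in
  let beta := b / (Num.sqrt (a * d) + b) in
  is_alt_min_limit A (D *m A *m D) /\
  D *m A *m D = mx2 alpha beta beta alpha /\
  doubly_stochastic (D *m A *m D).
Proof.
move=> hpos.
have ha := hpos 0 0; have hb := hpos 0 1; have hd := hpos 1 1.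
rewrite mx2_00 in ha; rewrite mx2_01 in hb; rewrite mx2_11 in hd.
have E := @DAD R a b d ha hb hd.
move=> A lambda D alpha beta.
have r0 : 0 < Num.sqrt (a * d) by rewrite sqrtr_gt0 mulr_gt0.
split; first by rewrite E; exact: (@alt_limit R a b d ha hb hd).
split; first exact: E.
rewrite E; split => i; rewrite /row_sum /col_sum sum2; move: i; apply: ord2P;
  rewrite ?mx2_00 ?mx2_01 ?mx2_10 ?mx2_11 /alpha /beta; field; nz.
Qed.
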